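(* There exists a locally finite poset $Q$ with a minimum element such that: (a) $Q$ has the Möbius uncertainty property: whenever $f,g:Q\to\mathbb{C}$ are functions, neither identically zero, with $g(z)=\sum_{x\leqslant z} f(x)$ for all $z\in Q$, at least one of $\{x: f(x)\neq0\}$ and $\{x: g(x)\neq 0\}$ is infinite; and (b) $Q$ does not have property $\mathcal{H}_3$: there is a three-element subset $S\subset Q$ such that for every $z\in S$ there are only finitely many $x\in Q$ with $x\geqslant z$ and $x\not\geqslant y$ for all $y\in S\setminus\{z\}$. Consequently, the Möbius uncertainty property does not imply property $\mathcal{H}_k$ for every $k\in\mathbb{N}$.
   Context: A poset is locally finite if every interval $\{z: x\leqslant z\leqslant y\}$ is finite. For $k\in\mathbb{N}$, a poset $P$ has property $\mathcal{H}_k$ if for every subset $S\subset P$ with $|S|=k$ there exists $z\in S$ such that infinitely many $x\in P$ satisfy $x\geqslant z$ and $x\not\geqslant y$ for all $y\in S\setminus\{z\}$. *)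

(* Defs.v *)
From mathcomp Require Import all_boot all_order all_algebra.
From mathcomp Require Import boolp classical_sets cardinality fsbigop reals Rstruct.
From mathcomp.real_closed Require Import complex.
Set Implicit Arguments. Unset Strict Implicit. Unset Printing Implicit Defensive.
Import Order.TTheory GRing.Theory Num.Theory.
Local Open Scope classical_set_scope.
Local Open Scope ring_scope.

Definition CC : numClosedFieldType := (Rdefinitions.R)[i].

Definition locally_finite (d : Order.disp_t) (Q : porderType d) : Prop :=
  forall x y : Q, finite_set [set z : Q | (x <= z)%O /\ (z <= y)%O].

Definition has_minimum (d : Order.disp_t) (Q : porderType d) : Prop :=
  exists m : Q, forall x : Q, (m <= x)%O.

Definition mobius_uncertainty (d : Order.disp_t) (Q : porderType d) : Prop :=
  forall f g : Q -> CC,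
    (exists x, f x != 0) -> (exists x, g x != 0) ->
    (forall z : Q, g z = \sum_(x \in [set x : Q | (x <= z)%O]) f x) ->
    ~ finite_set [set x : Q | f x != 0] \/ ~ finite_set [set x : Q | g x != 0].

Definition property_H (d : Order.disp_t) (Q : porderType d) (k : nat) : Prop :=
  forall S : seq Q, uniq S -> size S = k ->
    exists2 z : Q, z \in S &
      ~ finite_set [set x : Q | (z <= x)%O /\
                     (forall y : Q, y \in S -> y != z -> ~ (y <= x)%O)].

(* Main.v *)
From HB Require Import structures.
Require Import Defs.
From mathcomp Require Import all_boot all_order all_algebra.
From mathcomp Require Import boolp classical_sets cardinality fsbigop reals Rstruct.
From mathcomp.real_closed Require Import complex.
From mathcomp Require Import ring zify.
From Stdlib Require Import Lia.
Set Implicit Arguments. Unset Strict Implicit. Unset Printing Implicit Defensive.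

Definition plist : seq (nat * nat) := [:: (1,4); (1,5); (2,4); (2,6); (3,5); (3,6)]%N.
Definition ple (t t' : nat) : bool := [|| t == t', t == 0%N | (t, t') \in plist].

Lemma ple_refl t : ple t t. Proof. by rewrite /ple eqxx. Qed.
Lemma plist_snd t t' : (t, t') \in plist -> (3 < t')%N.
Proof. by rewrite /plist !inE; do ?case/orP; move/eqP=> [_ ->]. Qed.
Lemma plist_fst t t' : (t, t') \in plist -> (0 < t < 4)%N.
Proof. by rewrite /plist !inE; do ?case/orP; move/eqP=> [-> _]. Qed.
Lemma ple_trans : transitive ple.
Proof.
move=> t' t t'' /or3P[/eqP<-//|/eqP->|H1]; first by rewrite /ple eqxx orbT.
case/or3P=> [/eqP<-|/eqP E|H2]; first by rewrite /ple H1 !orbT.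
  by move: (plist_snd H1); rewrite E.
by move: (plist_snd H1) (plist_fst H2) => A /andP[_ B]; move: A; rewrite ltnNge -ltnS B.
Qed.
Lemma ple_anti t t' : ple t t' -> ple t' t -> t = t'.
Proof.
case/or3P=> [/eqP//|/eqP->|H1].
  by case/or3P=> [/eqP->|/eqP->|/plist_snd].
case/or3P=> [/eqP->//|/eqP E|H2]; first by move: (plist_snd H1); rewrite E.
by move: (plist_snd H1) (plist_fst H2) => A /andP[_ B]; move: A; rewrite ltnNge -ltnS B.
Qed.
Definition valid (p : nat * seq nat) : bool :=
  (p.1 < 7)%N && (if (0 < p.1 < 4)%N then p.2 == [::] else
                  if (4 <= p.1)%N then p.2 != [::] else true).

Definition Q := {p : nat * seq nat | valid p}.
HB.instance Definition _ := Choice.on Q.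

Definition qle (x y : Q) : bool := ple (val x).1 (val y).1 && prefix (val x).2 (val y).2.

Lemma prefix_anti (s1 s2 : seq nat) : prefix s1 s2 -> prefix s2 s1 -> s1 = s2.
Proof.
move=> H1 H2; have := size_prefix H1; have := size_prefix H2 => A B.
have E : size s1 = size s2 by apply/eqP; rewrite eqn_leq A B.
by move: H1; rewrite prefixE E take_size => /eqP.
Qed.

Lemma qle_refl : reflexive qle.
Proof. by move=> x; rewrite /qle ple_refl prefix_refl. Qed.
Lemma qle_trans : transitive qle.
Proof.
move=> y x z /andP[a b] /andP[c d]; rewrite /qle (ple_trans a c).
exact: prefix_trans b d.
Qed.
Lemma qle_anti : antisymmetric qle.
Proof.
move=> x y /andP[/andP[a b] /andP[c d]]; apply: val_inj.
case: (val x) (val y) a b c d => [t s] [t' s'] /= a b c d.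
by rewrite (ple_anti a c) (prefix_anti b d).
Qed.

Fact qdisp : Order.disp_t. Proof. exact: Order.Disp tt tt. Qed.
HB.instance Definition _ := Order.Le_isPOrder.Build qdisp Q qle_refl qle_anti qle_trans.

Lemma leQ (x y : Q) : (x <= y)%O = qle x y. Proof. by []. Qed.

Lemma prefix_rcons_inv (s s' : seq nat) a :
  prefix s' (rcons s a) -> s' = rcons s a \/ prefix s' s.
Proof.
elim: s s' => [|b s IH] [|c s'] /=; try by right.
  by case: s' => [|? ?] /andP[/eqP-> //]; left.
by case/andP=> /eqP-> /IH [->|H]; [left | right; rewrite eqxx H].
Qed.

Definition bot : Q := exist _ (0%N, [::]) isT.
Definition E (k : nat) : Q := insubd bot (k, [::]).

Lemma valE k : (0 < k < 4)%N -> val (E k) = (k, [::]).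
Proof.
move=> hk; rewrite val_insubd /valid /= hk.
by case/andP: hk => _ /leq_trans->.
Qed.

Lemma up_abc (j t : nat) : (0 < j < 4)%N -> ple j t ->
  t = j \/ exists2 k, (0 < k < 4)%N && (k != j) & ple k t.
Proof.
move=> hj /or3P[/eqP->|/eqP E0|]; first by left.
  by rewrite E0 in hj.
rewrite /plist !inE; do ?case/orP; move/eqP=> [-> ->]; right;
  first [by exists 1%N | by exists 2%N | by exists 3%N].
Qed.

Lemma H3_fails : ~ property_H Q 3.
Proof.
move=> H.
have neqE j k : (0 < j < 4)%N -> (0 < k < 4)%N -> j != k -> E j != E k.
  by move=> hj hk jk; apply/eqP => /(congr1 val); rewrite !valE // => -[/eqP]; rewrite (negbTE jk).
have uS : uniq [:: E 1; E 2; E 3] by rewrite /= !inE !negb_or !neqE.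
have [z zS] := H [:: E 1; E 2; E 3] uS erefl.
suff: exists2 j, (0 < j < 4)%N & z = E j.
  case=> j hj ->{z zS}; apply; apply: (sub_finite_set _ (finite_set1 (E j))).
  move=> [[t s] v] [] /=; rewrite leQ /qle valE //= => /andP[hjt _] Hy.
  have [Et|[k /andP[hk kj] hkt]] := up_abc hj hjt.
    apply: val_inj; rewrite valE //=; move: (v); rewrite /valid /= Et hj.
    by case/andP=> _ /eqP->.
  exfalso; apply: (Hy (E k)).
  - move: hk; rewrite !inE; case: k {kj hkt} => [|[|[|[|k]]]] //= _;
      by rewrite eqxx ?orbT.
  - exact: neqE.
  - by rewrite leQ /qle valE //= hkt prefix0s.
move: zS; rewrite !inE => /or3P[/eqP->|/eqP->|/eqP->]; by [exists 1%N|exists 2%N|exists 3%N].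
Qed.

Lemma Qmin : has_minimum Q.
Proof. by exists bot => x; rewrite leQ /qle /= prefix0s /ple eqxx orbT. Qed.

Definition L0 (s : seq nat) : seq (nat * seq nat) :=
  [seq (t, take i s) | t <- iota 0 7, i <- iota 0 (size s).+1].

Lemma Qlf : locally_finite Q.
Proof.
move=> x y; apply: (sub_finite_set (B := insubd y @` [set` L0 (val y).2])).
  move=> z [_]; rewrite leQ /qle => /andP[_ pz]; exists (val z); last exact: valKd.
  case: z pz => [[t s] v] /= pz.
  have -> : s = take (size s) (val y).2 by move: pz; rewrite prefixE => /eqP->.
  apply: allpairs_f; first by rewrite mem_iota add0n; case/andP: v.
  by rewrite mem_iota add0n ltnS size_prefix.
exact/finite_image/finite_seq.
Qed.

Import Order.TTheory GRing.Theory Num.Theory.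
Local Open Scope classical_set_scope.
Local Open Scope ring_scope.

Lemma sum1 (f : Q -> CC) (z x : Q) : (x <= z)%O ->
  (forall y, (y <= z)%O -> y != x -> f y = 0) ->
  \sum_(y \in [set y : Q | (y <= z)%O]) f y = f x.
Proof.
move=> xz H; rewrite -(fsbig_widen [set x]) ?fsbig_set1 //.
  by move=> y ->.
by move=> y [/= yz /eqP yx]; apply: H.
Qed.

Lemma sum2 (f : Q -> CC) (z x1 x2 : Q) : (x1 <= z)%O -> (x2 <= z)%O -> x1 != x2 ->
  (forall y, (y <= z)%O -> y != x1 -> y != x2 -> f y = 0) ->
  \sum_(y \in [set y : Q | (y <= z)%O]) f y = f x1 + f x2.
Proof.
move=> x1z x2z x12 H; rewrite -(fsbig_widen ([set x1] `|` [set x2])).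
- rewrite fsbigU0 ?fsbig_set1 //; try exact: finite_set1.
  by move=> y [/= -> E2]; move: x12; rewrite E2 eqxx.
- by move=> y [->|->].
- by move=> y [/= yz /not_orP[/eqP y1 /eqP y2]]; apply: H.
Qed.

Lemma le_foldr_max i (s : seq nat) : i \in s -> (i <= foldr maxn 0 s)%N.
Proof.
elim: s => //= a s IH; rewrite inE => /orP[/eqP->|/IH H]; first exact: leq_maxl.
exact: leq_trans H (leq_maxr _ _).
Qed.

Definition rank (t : nat) : nat := if t == 0%N then 0%N else if (t < 4)%N then 1%N else 2%N.
Definition ht (x : Q) : nat := (3 * size (val x).2 + rank (val x).1)%N.

Lemma ht_lt (x y : Q) : (y <= x)%O -> y != x -> (ht y < ht x)%N.
Proof.
case: x y => [[tx sx] vx] [[ty sy] vy]; rewrite leQ /qle /ht /= => /andP[pt ps] yx.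
have rk t : (rank t <= 2)%N by rewrite /rank; case: ifP => //; case: ifP.
case: (ltnP (size sy) (size sx)) => hs.
  have := rk ty; lia.
have esz : size sy = size sx by apply/eqP; rewrite eqn_leq hs size_prefix.
have es : sy = sx by move: ps; rewrite prefixE esz take_size => /eqP.
subst sy; rewrite ltn_add2l.
have tyx : ty != tx.
  apply: contra yx => /eqP ety; apply/eqP/val_inj => /=; by rewrite ety.
move: pt; rewrite /ple (negbTE tyx) /= => /orP[/eqP ty0|H].
  subst ty; by rewrite /rank eqxx; move: tyx; rewrite eq_sym => /negbTE->; case: ifP.
have /andP[h1 h2] := plist_fst H; have h3 := plist_snd H.
have -> : rank ty = 1%N by rewrite /rank h2; case: eqP h1 => // ->.
have -> : rank tx = 2%N by rewrite /rank ltnNge h3; case: eqP h3 => // ->.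
by [].
Qed.

Lemma neqE j k : (0 < j < 4)%N -> (0 < k < 4)%N -> j != k -> E j != E k.
Proof.
by move=> hj hk jk; apply/eqP => /(congr1 val); rewrite !valE // => -[/eqP]; rewrite (negbTE jk).
Qed.

Lemma uncert_core (f g : Q -> CC) (N : nat)
  (Hsum : forall z, g z = \sum_(x \in [set x : Q | (x <= z)%O]) f x)
  (fN : forall x : Q, N \in (val x).2 -> f x = 0)
  (gN : forall x : Q, N \in (val x).2 -> g x = 0) : forall x, f x = 0.
Proof.
have tree (x : Q) : ~~ (0 < (val x).1 < 4)%N ->
    (forall y, (y <= x)%O -> y != x -> f y = 0) -> f x = 0.
  move=> hx IH; set x' := insubd x ((val x).1, rcons (val x).2 N).
  have vx' : val x' = ((val x).1, rcons (val x).2 N).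
    rewrite val_insubd /valid /= (negbTE hx).
    have := valP x; rewrite /valid (negbTE hx) => /andP[-> _].
    case: ifP => //; have -> : rcons (sval x).2 N != [::] by rewrite -size_eq0 size_rcons.
    by case: ifP.
  have := gN x'; rewrite vx' mem_rcons inE eqxx => /(_ isT).
  rewrite Hsum (sum1 (x := x)) //.
    by rewrite leQ /qle vx' /= ple_refl prefix_rcons.
  move=> y; rewrite leQ /qle vx' /= => /andP[pt /prefix_rcons_inv [e|p]] yx.
    by apply: fN; rewrite e mem_rcons inE eqxx.
  by apply: IH => //; rewrite leQ /qle pt p.
have Weq i j k : (3 < i < 7)%N -> [seq p.1 | p <- plist & p.2 == i] = [:: j; k] ->
    (0 < j < 4)%N -> (0 < k < 4)%N -> j != k -> f bot = 0 -> f (E j) + f (E k) = 0.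
  move=> hi hl hj hk jk fb.
  set w := insubd bot (i, [::N]).
  have vw : val w = (i, [::N]).
    rewrite val_insubd /valid /=; case/andP: hi => h1 ->.
    have h4 : (4 <= i)%N := h1.
    have h5 : (0 < i < 4)%N = false by rewrite [(i < 4)%N]ltnNge h4 andbF.
    by rewrite h5 h4.
  have inl t : t \in [:: j; k] -> ple t i.
    rewrite -hl => /mapP[[a b]]; rewrite mem_filter /= => /andP[/eqP bi ab] ->.
    by rewrite /ple -bi ab !orbT.
  have := gN w; rewrite vw inE eqxx => /(_ isT).
  rewrite Hsum (sum2 (x1 := E j) (x2 := E k)) ?neqE //.
  - by rewrite leQ /qle valE // vw /= ?prefix0s ?andbT inl // inE eqxx.
  - by rewrite leQ /qle valE // vw /= ?prefix0s ?andbT inl // !inE eqxx orbT.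
  move=> [[ty sy] vy]; rewrite leQ /qle vw => /andP[pt ps]; rewrite /= in pt.
  have ps' : prefix sy [:: N] := ps.
  move: ps'; rewrite prefixs1 => /orP[/eqP sy0|/eqP syN]; last first.
    by move=> _ _; apply: fN; rewrite /= syN inE eqxx.
  subst sy => yj yk.
  case/or3P: pt => [/eqP ti|/eqP t0|tp].
  - exfalso; clear ps yj yk; move: vy; rewrite /valid /= ti; case/andP: hi => h1 h2.
    have h4 : (4 <= i)%N := h1.
    by rewrite [(i < 4)%N]ltnNge h4 andbF /= andbF.
  - suff -> : exist valid (ty, [::]) vy = bot by [].
    by apply: val_inj; rewrite /= t0.
  - have : ty \in [:: j; k].
      by rewrite -hl; apply/mapP; exists (ty, i) => //; rewrite mem_filter /= eqxx.
    rewrite !inE => /orP[/eqP e|/eqP e].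
      by exfalso; move/negP: yj; apply; apply/eqP/val_inj; rewrite valE //= e.
    by exfalso; move/negP: yk; apply; apply/eqP/val_inj; rewrite valE //= e.
have abc : f bot = 0 -> forall j, (0 < j < 4)%N -> f (E j) = 0.
  move=> fb.
  have e12 := Weq 4%N 1%N 2%N isT erefl isT isT isT fb.
  have e13 := Weq 5%N 1%N 3%N isT erefl isT isT isT fb.
  have e23 := Weq 6%N 2%N 3%N isT erefl isT isT isT fb.
  have two a : a *+ 2 = 0 -> a = 0 :> CC by move/eqP; rewrite mulrn_eq0 => /= /eqP.
  have ha : f (E 1) = 0.
    apply: two; transitivity ((f (E 1) + f (E 2)) + (f (E 1) + f (E 3)) - (f (E 2) + f (E 3))); first by ring.
    by rewrite e12 e13 e23 addr0 subr0.
  have hb : f (E 2) = 0 by move: e12; rewrite ha add0r.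
  have hc : f (E 3) = 0 by move: e13; rewrite ha add0r.
  by move=> j; case: j => [|[|[|[|j]]]].
have ind n : forall x, (ht x < n)%N -> f x = 0.
  elim: n => // n IHn x hx.
  case h: (0 < (val x).1 < 4)%N.
    have fb : f bot = 0.
      apply: IHn; have -> : ht bot = 0%N by [].
      have : (0 < ht x)%N.
        rewrite /ht /rank; case: eqP => [e|_]; first by rewrite e in h.
        case: ifP => _; lia.
      lia.
    have -> : x = E (val x).1.
      apply: val_inj; rewrite valE //; case: x h hx => [[t s] v] /= h _.
      by move: (v); rewrite /valid /= h => /andP[_ /eqP->].
    exact: abc.
  apply: tree; first by rewrite h.
  move=> y yx nyx; apply: IHn; have := ht_lt yx nyx; lia.
by move=> x; apply: (ind (ht x).+1).
Qed.

Lemma Qmob : mobius_uncertainty Q.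
Proof.
move=> f g [x0 fx0] _ Hsum.
have [ff|nf] := pselect (finite_set [set x | f x != 0]); last by left.
have [fg|ng] := pselect (finite_set [set x | g x != 0]); last by right.
exfalso; case/finite_seqP: ff => sf ef; case/finite_seqP: fg => sg eg.
pose lab (x : Q) := foldr maxn 0%N (val x).2.
pose N := (foldr maxn 0%N (map lab (sf ++ sg))).+1.
have fresh (x : Q) : N \in (val x).2 -> x \notin sf ++ sg.
  move=> hN; apply/negP => hx.
  have h1 := le_foldr_max hN.
  have h2 := le_foldr_max (map_f lab hx).
  have h3 : (N <= lab x)%N := h1.
  move: h2 h3; rewrite /N => A B; by move: (leq_trans B A); rewrite ltnn.
have fN (x : Q) : N \in (val x).2 -> f x = 0.
  move=> hN; apply/eqP; apply: contraNT (fresh x hN) => fx.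
  have : [set x | f x != 0] x by [].
  by rewrite ef /= mem_cat => ->.
have gN (x : Q) : N \in (val x).2 -> g x = 0.
  move=> hN; apply/eqP; apply: contraNT (fresh x hN) => gx.
  have : [set x | g x != 0] x by [].
  by rewrite eg /= mem_cat => ->; rewrite orbT.
by move: fx0; rewrite (uncert_core Hsum fN gN) eqxx.
Qed.

Close Scope ring_scope.
Close Scope classical_set_scope.

Theorem theorem1p7 :
  exists (d : Order.disp_t) (Q : porderType d),
    [/\ locally_finite Q, has_minimum Q, mobius_uncertainty Q
      & ~ property_H Q 3].
Proof.
exists qdisp, Q; split; [exact: Qlf | exact: Qmin | exact: Qmob | exact: H3_fails].
Qed.
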